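(* Let $\phi:X\to Y$ be a morphism of $\mathrm{Agg}^{\rm ctd}$. Then the automorphism group of $\phi$ in the arrow category, i.e. the group of pairs $(\alpha,\beta)\in\mathrm{Aut}(X)\times\mathrm{Aut}(Y)$ with $\beta\circ\phi=\phi\circ\alpha$, is isomorphic to the automorphism group (in $\mathrm{Gr}$) of the ghost graph $\mathbb{\Gamma}(\phi)$.
   Context: A graph $\Gamma=(F,V,\partial,\imath)$ consists of finite sets $F$ (flags) and $V$ (vertices), a map $\partial:F\to V$ and an involution $\imath$ of $F$. The two-element orbits of $\imath$ are the edges, the fixed points the outer flags. A graph morphism $\phi:\Gamma\to\Gamma'=(F',V',\partial',\imath')$ is a triple $(\phi_V,\phi^F,\imath_\phi)$ with $\phi_V:V\to V'$ surjective, $\phi^F:F'\to F$ injective and $\imath_\phi$ a fixed-point-free involution of $F\setminus\phi^F(F')$, such that: (i) $\phi_V\partial\phi^F=\partial'$ and $\phi_V\partial(f)=\phi_V\partial(\imath_\phi f)$ for $f\notin\phi^F(F')$; (ii) for $f\notin\phi^F(F')$, either $\{f,\imath f\}$ is an edge of $\Gamma$ and $\imath_\phi f=\imath f$, or $f$ and $\imath_\phi f$ are both outer flags of $\Gamma$; (iii) if $f'\in F'$ and $\phi^F(f')$ lies on an edge of $\Gamma$, then $\imath(\phi^F f')=\phi^F(\imath' f')$. Composition: $(\psi\phi)_V=\psi_V\phi_V$, $(\psi\phi)^F=\phi^F\psi^F$, $\imath_{\psi\phi}$ equals $\imath_\phi$ off $\phi^F(F')$ and $\phi^F\imath_\psi(\phi^F)^{-1}$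 on $\phi^F(F'\setminus\psi^F(F''))$; this is the category $\mathrm{Gr}$. Isomorphisms: $\phi_V,\phi^F$ bijective. The ghost graph of $\phi$ is $\mathbb{\Gamma}(\phi)=(F,V,\partial,\hat\imath_\phi)$, $\hat\imath_\phi$ extending $\imath_\phi$ by the identity on $\phi^F(F')$. An aggregate is a graph with $\imath=\mathrm{id}$. For distinct outer flags $s,t$ of an aggregate, the virtual edge contraction ${}_s\circ_t$ ($\partial s\neq\partial t$) resp. virtual loop contraction $\circ_{st}$ ($\partial s=\partial t$) is the morphism $(\text{quotient } V\to V/(\partial s\sim\partial t),\ \text{inclusion } F\setminus\{s,t\}\hookrightarrow F,\ \imath_\phi(s)=t)$. $\mathrm{Agg}^{\rm ctd}$ is the category of aggregates whose morphisms are generated by isomorphisms and virtual edge and loop contractions. *)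

(* Defs.v *)
From mathcomp Require Import all_boot.
Set Implicit Arguments. Unset Strict Implicit. Unset Printing Implicit Defensive.

Record graph := Graph {
  flag : finType; vert : finType; bd : flag -> vert; iv : flag -> flag }.
Arguments bd : clear implicits.
Arguments iv : clear implicits.

Definition is_graph (G : graph) : Prop := involutive (iv G).
Definition aggregate (G : graph) : Prop := forall f, iv G f = f.

(* A graph morphism G -> H: (phi_V, phi^F, hat-i_phi), where the involution
   i_phi of F \ phi^F(F') is stored as its extension hat-i_phi by the identity
   on phi^F(F') (the ghost involution); this makes the representation unique. *)
Record morph (G H : graph) := Morph {
  mV : {ffun vert G -> vert H};
  mF : {ffun flag H -> flag G};
  mi : {ffun flag G -> flag G} }.

Definition in_img (G H : graph) (p : morph G H) (f : flag G) : bool :=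
  [exists f', mF p f' == f].

Definition is_morph (G H : graph) (p : morph G H) : Prop :=
  (forall v', exists v, mV p v = v') /\
  injective (mF p) /\
  (forall f, in_img p f -> mi p f = f) /\
  (forall f, ~~ in_img p f -> mi p f != f /\ mi p (mi p f) = f) /\
  (forall f', mV p (bd G (mF p f')) = bd H f') /\
  (forall f, ~~ in_img p f -> mV p (bd G f) = mV p (bd G (mi p f))) /\
  (forall f, ~~ in_img p f ->
     (iv G f != f /\ mi p f = iv G f) \/ (iv G f = f /\ iv G (mi p f) = mi p f)) /\
  (forall f', iv G (mF p f') != mF p f' -> iv G (mF p f') = mF p (iv H f')).

Definition mcomp (G H K : graph) (q : morph H K) (p : morph G H) : morph G K :=
  Morph [ffun v => mV q (mV p v)]
        [ffun f'' => mF p (mF q f'')]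
        [ffun f => match [pick f' | mF p f' == f] with
                   | Some f' => mF p (mi q f')
                   | None => mi p f end].

Definition is_iso (G H : graph) (p : morph G H) : Prop :=
  is_morph p /\ bijective (mV p) /\ bijective (mF p).

Definition ghost (G H : graph) (p : morph G H) : graph :=
  @Graph (flag G) (vert G) (bd G) (fun f => mi p f).

(* Virtual edge/loop contraction of an aggregate X at distinct flags s, t.  Target vertices: V / (bd s ~ bd t), represented by
   the vertices other than bd t (or all of V when bd s = bd t). *)
Definition vc_F (X : graph) (s t : flag X) : finType :=
  {f : flag X | (f != s) && (f != t)}.
Definition vc_V (X : graph) (s t : flag X) : finType :=
  {v : vert X | (v != bd X t) || (bd X s == bd X t)}.
Definition vc_base (X : graph) (s t : flag X) : vc_V s t :=
  @exist _ (fun v => is_true ((v != bd X t) || (bd X s == bd X t)))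
    (bd X s) (orNb (bd X s == bd X t)).
Definition vc_q (X : graph) (s t : flag X) (v : vert X) : vc_V s t :=
  insubd (vc_base s t) (if v == bd X t then bd X s else v).
Definition vc_graph (X : graph) (s t : flag X) : graph :=
  @Graph (vc_F s t) (vc_V s t) (fun f => vc_q s t (bd X (val f))) (fun f => f).
Definition vc_morph (X : graph) (s t : flag X) : morph X (vc_graph s t) :=
  @Morph X (vc_graph s t) [ffun v => vc_q s t v : vert (vc_graph s t)]
        [ffun f : flag (vc_graph s t) => (val f : flag X)]
        [ffun f => if f == s then t else if f == t then s else f].

Inductive ctd : forall (G H : graph), morph G H -> Prop :=
| ctd_iso (G H : graph) (p : morph G H) :
    aggregate G -> aggregate H -> is_iso p -> ctd p
| ctd_vc (X : graph) (s t : flag X) :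
    aggregate X -> s != t -> ctd (vc_morph s t)
| ctd_comp (G H K : graph) (p : morph G H) (q : morph H K) :
    ctd p -> ctd q -> ctd (mcomp q p).

Definition arrow_aut (X Y : graph) (phi : morph X Y) (ab : morph X X * morph Y Y) : Prop :=
  is_iso ab.1 /\ is_iso ab.2 /\ mcomp ab.2 phi = mcomp phi ab.1.

(* Main.v *)
Require Import Defs.
From mathcomp Require Import all_boot.
Set Implicit Arguments. Unset Strict Implicit. Unset Printing Implicit Defensive.

Inductive conn (T : Type) (R : T -> T -> Prop) : T -> T -> Prop :=
| conn0 x : conn R x x
| connS x y z : R x y -> conn R y z -> conn R x z.

Lemma conn_trans T (R : T -> T -> Prop) x y z : conn R x y -> conn R y z -> conn R x z.
Proof. elim=> // a b c Hab _ IH Hz; apply: connS Hab (IH Hz). Qed.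

Definition gedge (G H : graph) (p : morph G H) (x y : vert G) : Prop :=
  exists f, mi p f != f /\ bd G f = x /\ bd G (mi p f) = y.

Record Mprop (G H : graph) (p : morph G H) : Prop := MP {
  m0a : aggregate G; m0b : aggregate H;
  m1 : forall y, exists x, mV p x = y;
  m2 : injective (mF p);
  m3 : forall f, in_img p f = (mi p f == f);
  m4 : involutive (mi p);
  m5 : forall f', mV p (bd G (mF p f')) = bd H f';
  m6 : forall f, mV p (bd G f) = mV p (bd G (mi p f));
  m7 : forall x y, mV p x = mV p y -> conn (gedge p) x y }.

Lemma iso_img G H (p : morph G H) : is_iso p -> forall f, in_img p f.
Proof. case=> _ [_ [g _ Hg]] f; apply/existsP; exists (g f); by rewrite Hg. Qed.

Lemma iso_mi G H (p : morph G H) : is_iso p -> forall f, mi p f = f.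
Proof. move=> Hi f; case: (Hi) => [[_ [_ [H3 _]]] _]; exact: H3 (iso_img Hi f). Qed.

Lemma iso_M G H (p : morph G H) : aggregate G -> aggregate H -> is_iso p -> Mprop p.
Proof.
move=> aG aH Hi; have [[c1 [c2 [c3 [c4 [c5 [c6 [c7 c8]]]]]]] [bV bF]] := Hi.
apply: MP => //.
- by move=> f; rewrite iso_img // iso_mi // eqxx.
- by move=> f; rewrite !iso_mi.
- by move=> f; rewrite iso_mi.
- move=> x y /(bij_inj bV) ->; exact: conn0.
Qed.

Lemma vc_val X (s t : flag X) x :
  val (vc_q s t x) = if x == bd X t then bd X s else x.
Proof.
rewrite /vc_q insubdK // unfold_in /=.
by case: ifP => [_|/negbT ->]; case: eqP; rewrite ?orbT.
Qed.

Lemma vc_M X (s t : flag X) : aggregate X -> s != t -> Mprop (vc_morph s t).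
Proof.
move=> aX st; have ts : t != s by rewrite eq_sym.
apply: MP => //.
- move=> v; exists (val v); apply: val_inj; rewrite ffunE vc_val.
  case: eqP => // E; case: v E => v /= /orP [/eqP //|/eqP ->] ->; done.
- by move=> f1 f2; rewrite !ffunE; apply: val_inj.
- move=> f; rewrite ffunE; case: (eqVneq f s) => [->|fs].
    rewrite (negbTE ts); apply/negbTE/existsP => -[f' /eqP].
    by rewrite ffunE => E; case/andP: (valP f'); rewrite E eqxx.
  case: (eqVneq f t) => [->|ft].
    rewrite (negbTE st); apply/negbTE/existsP => -[f' /eqP].
    by rewrite ffunE => E; case/andP: (valP f'); rewrite E eqxx; case: (t != s).
  rewrite eqxx; apply/existsP.
  by exists (exist _ f (introT andP (conj fs ft)) : vc_F s t); rewrite ffunE.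
- move=> f; rewrite !ffunE; case: (eqVneq f s) => [->|fs].
    by rewrite (negbTE ts) eqxx.
  case: (eqVneq f t) => [->|ft]; first by rewrite eqxx.
  by rewrite (negbTE fs) (negbTE ft).
- by move=> f'; rewrite !ffunE.
- move=> f; rewrite !ffunE; apply: val_inj; rewrite !vc_val.
  case: (eqVneq f s) => [->|fs].
    by rewrite eqxx; case: eqP.
  case: (eqVneq f t) => [->|ft]; first by rewrite eqxx; case: eqP.
  done.
- move=> x y; rewrite !ffunE => /(congr1 val); rewrite !vc_val.
  have Es : mi (vc_morph s t) s = t by rewrite ffunE eqxx.
  have Et : mi (vc_morph s t) t = s by rewrite ffunE (negbTE ts) eqxx.
  case: (x =P bd X t) => [->|hx]; case: (y =P bd X t) => [->|hy] E.
  + exact: conn0.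
  + rewrite -E; apply: connS (conn0 _ _); exists t; by rewrite Et.
  + rewrite E; apply: connS (conn0 _ _); exists s; by rewrite Es eq_sym.
  + rewrite E; exact: conn0.
Qed.

Section Comp.
Variables (G H K : graph) (p : morph G H) (q : morph H K).
Hypotheses (Mp : Mprop p) (Mq : Mprop q).

Lemma mi_in f' : mi (mcomp q p) (mF p f') = mF p (mi q f').
Proof.
rewrite ffunE; case: pickP => [f1 /eqP E|/(_ f') ]; last by rewrite eqxx.
by rewrite (m2 Mp E).
Qed.

Lemma mi_out f : ~~ in_img p f -> mi (mcomp q p) f = mi p f.
Proof.
move=> nI; rewrite ffunE; case: pickP => // f1 E.
by case/negP: nI; apply/existsP; exists f1.
Qed.

Lemma img_case f : (exists f', f = mF p f') \/ ~~ in_img p f.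
Proof.
case: (boolP (in_img p f)) => [/existsP [f' /eqP <-]|]; [left; by exists f' | by right].
Qed.

Lemma comp_M : Mprop (mcomp q p).
Proof.
apply: MP.
- exact: m0a Mp.
- exact: m0b Mq.
- move=> z; have [y <-] := m1 Mq z; have [x <-] := m1 Mp y.
  by exists x; rewrite ffunE.
- by move=> a b; rewrite !ffunE => /(m2 Mp) /(m2 Mq).
- move=> f; case: (img_case f) => [[f' ->]|nI].
    rewrite mi_in (inj_eq (m2 Mp)) -(m3 Mq).
    apply/existsP/existsP => -[g /eqP E]; exists g; apply/eqP.
      by move: E; rewrite ffunE => /(m2 Mp).
    by rewrite ffunE E.
  rewrite mi_out // -(m3 Mp) (negbTE nI); apply/negbTE/existsP => -[g /eqP E].
  by case/negP: nI; apply/existsP; exists (mF q g); rewrite -E ffunE.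
- move=> f; case: (img_case f) => [[f' ->]|nI].
    by rewrite !mi_in (m4 Mq).
  have nI' : ~~ in_img p (mi p f).
    by rewrite (m3 Mp) (m4 Mp) eq_sym -(m3 Mp).
  by rewrite (mi_out nI) (mi_out nI') (m4 Mp).
- by move=> f''; rewrite !ffunE (m5 Mp) (m5 Mq).
- move=> f; case: (img_case f) => [[f' ->]|nI].
    by rewrite mi_in !ffunE !(m5 Mp) (m6 Mq).
  by rewrite (mi_out nI) !ffunE (m6 Mp).
- have mono x y : gedge p x y -> gedge (mcomp q p) x y.
    case=> f [nf [E1 E2]]; have nI : ~~ in_img p f by rewrite (m3 Mp).
    by exists f; rewrite (mi_out nI).
  have fib x y : mV p x = mV p y -> conn (gedge (mcomp q p)) x y.
    move/(m7 Mp); elim=> [z|a b c /mono Hab _ IH]; first exact: conn0.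
    exact: connS Hab IH.
  have lift u w : conn (gedge q) u w -> forall x y, mV p x = u -> mV p y = w ->
      conn (gedge (mcomp q p)) x y.
    elim=> [z|u1 v1 w1 [f' [nf [E1 E2]]] _ IH] x y Hx Hy.
      by apply: fib; rewrite Hx Hy.
    pose a := bd G (mF p f'); pose b := bd G (mF p (mi q f')).
    have Ha : mV p a = u1 by rewrite -E1; rewrite /a (m5 Mp).
    have Hb : mV p b = v1 by rewrite -E2; rewrite /b (m5 Mp).
    apply: conn_trans (fib x a _) _; first by rewrite Hx Ha.
    apply: connS (IH b y Hb Hy).
    exists (mF p f'); rewrite mi_in (inj_eq (m2 Mp)); split=> //.
  move=> x y; rewrite !ffunE => /(m7 Mq) Hc; exact: lift _ _ Hc x y erefl erefl.
Qed.
End Comp.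

Lemma ctd_M (G H : graph) (p : morph G H) : ctd p -> Mprop p.
Proof.
elim=> {G H p}.
- by move=> G H p aG aH Hi; apply: iso_M.
- by move=> X s t aX st; apply: vc_M.
- by move=> G H K p q _ Mp _ Mq; apply: comp_M.
Qed.

Lemma surj_bij (T : finType) (f : T -> T) : (forall y, exists x, f x = y) -> bijective f.
Proof.
move=> Hs; have Hs' y : exists x, f x == y by have [x <-] := Hs y; exists x.
pose s y := sval (sigW (Hs' y)).
have sK : cancel s f := fun y => eqP (svalP (sigW (Hs' y))).
have [s' H1 H2] := injF_bij (can_inj sK).
exists s => // x; have E : x = s (s' x) by rewrite H2.
by rewrite {1}E sK H2.
Qed.

Section Main.
Variables (X Y : graph) (phi : morph X Y).
Hypothesis M : Mprop phi.

Lemma arrow_commute (a : morph X X) (b : morph Y Y) :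
  is_iso a -> is_iso b -> mcomp b phi = mcomp phi a ->
  forall f, mi phi (mF a f) = mF a (mi phi f).
Proof.
move=> Ha Hb Heq f.
have ai : injective (mF a) by case: Ha => _ [_ /bij_inj].
have E := congr1 (fun m => mi m (mF a f)) Heq; move: E => /=; rewrite !ffunE.
case: pickP => [f1 /eqP E1|n1]; case: pickP => [f2 /eqP E2|n2].
- rewrite (ai _ _ E2) iso_mi // E1 => <-.
  have : in_img phi (mF a f) by apply/existsP; exists f1; rewrite E1.
  by rewrite (m3 M) => /eqP.
- by have := n2 f; rewrite eqxx.
- by rewrite (ai _ _ E2).
- by have := n2 f; rewrite eqxx.
Qed.

Lemma beta_unique (a : morph X X) (b d : morph Y Y) :
  is_iso b -> is_iso d -> mcomp b phi = mcomp phi a -> mcomp d phi = mcomp phi a -> b = d.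
Proof.
move=> Hb Hd E1 E2.
have EV x : mV b (mV phi x) = mV d (mV phi x).
  have := congr1 (fun m => mV m x) E1; have := congr1 (fun m => mV m x) E2.
  by rewrite /= !ffunE => -> ->.
have EF f : mF b f = mF d f.
  apply: (m2 M).
  have := congr1 (fun m => mF m f) E1; have := congr1 (fun m => mF m f) E2.
  by rewrite /= !ffunE => -> ->.
have Ei f : mi b f = mi d f by rewrite !iso_mi.
case: b d Hb Hd E1 E2 EV EF Ei => bV bF bi [dV dF di] /= _ _ _ _ EV EF Ei.
congr Morph; apply/ffunP => z //.
by have [x <-] := m1 M z; apply: EV.
Qed.

Variable g : morph (ghost phi) (ghost phi).
Hypothesis Hg : is_iso g.

Lemma g_inj : injective (mF g).
Proof. by case: Hg => _ [_ /bij_inj]. Qed.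

Lemma gcommute f : mi phi (mF g f) = mF g (mi phi f).
Proof.
have [[c1 [c2 [c3 [c4 [c5 [c6 [c7 c8]]]]]]] _] := Hg.
have fix1 h : mi phi h = h -> mi phi (mF g h) = mF g h.
  move=> Eh; apply/eqP; apply/negPn/negP => N.
  move: (c8 h N) => /= E; rewrite Eh in E.
  by rewrite E eqxx in N.
pose A := [set h | mi phi h == h].
have sub : [set mF g h | h in A] \subset A.
  apply/subsetP => x /imsetP [h hA ->]; move: hA; rewrite !inE => /eqP /fix1 E.
  by rewrite E.
have EA : [set mF g h | h in A] = A.
  by apply/eqP; rewrite eqEcard sub card_imset ?leqnn //; try (move=> u v; exact: g_inj).
case: (boolP (mi phi (mF g f) == mF g f)) => [E|/c8 //].
have : mF g f \in A by rewrite inE.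
rewrite -EA mem_imset; last by move=> u v; exact: g_inj.
by rewrite inE (eqP E) => /eqP ->.
Qed.

Lemma gfib x1 x2 : mV phi x1 = mV phi x2 -> mV phi (mV g x1) = mV phi (mV g x2).
Proof.
have [[c1 [c2 [c3 [c4 [c5 [c6 [c7 c8]]]]]]] [_ [ginv gK1 gK2]]] := Hg.
move/(m7 M); elim=> // a0 b0 c0 [f [_ [<- <-]]] _ <-.
rewrite -[f]gK2 gcommute.
have c5' h : mV g (bd X (mF g h)) = bd X h := c5 h.
by rewrite !c5' (m6 M).
Qed.

End Main.

Definition toG (X Y : graph) (phi : morph X Y) (a : morph X X) : morph (ghost phi) (ghost phi) :=
  @Morph (ghost phi) (ghost phi) (mV a) (mF a) (mi a).
Definition toX (X Y : graph) (phi : morph X Y) (g : morph (ghost phi) (ghost phi)) : morph X X :=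
  @Morph X X (mV g) (mF g) (mi g).

Lemma toG_inj (X Y : graph) (phi : morph X Y) : injective (toG phi).
Proof. by case=> [? ? ?] [? ? ?] [-> -> ->]. Qed.

Lemma toGX (X Y : graph) (phi : morph X Y) g : toG phi (toX g) = g.
Proof. by case: g. Qed.

Section Surj.
Variables (X Y : graph) (phi : morph X Y).
Hypothesis M : Mprop phi.
Variable g : morph (ghost phi) (ghost phi).
Hypothesis Hg : is_iso g.

Lemma g_isoX : is_iso (toX g).
Proof.
have [[c1 [c2 [c3 [c4 [c5 [c6 [c7 c8]]]]]]] [bV bF]] := Hg.
have allI f : in_img (toX g) f by exact (iso_img Hg f).
split=> //; do 7 (split=> //); last first.
  by move=> f'; rewrite (m0a M) eqxx.
by move=> f; rewrite allI.
Qed.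

Lemma beta_ex : exists b : morph Y Y, is_iso b /\ mcomp b phi = mcomp phi (toX g).
Proof.
have [[c1 [c2 [c3 [c4 [c5 [c6 [c7 c8]]]]]]] [[ginv gK1 gK2] [gFinv gFK1 gFK2]]] := Hg.
have Hs y : exists x, mV phi x == y by have [x <-] := m1 M y; exists x.
pose sec y := sval (sigW (Hs y)).
have secK y : mV phi (sec y) = y := eqP (svalP (sigW (Hs y))).
have Hf f' : exists f'', mF phi f'' == mF g (mF phi f').
  suff : in_img phi (mF g (mF phi f')) by move/existsP.
  rewrite (m3 M) (gcommute Hg).
  have : in_img phi (mF phi f') by apply/existsP; exists f'.
  by rewrite (m3 M) => /eqP ->.
pose fsec f' := sval (sigW (Hf f')).
have fsecK f' : mF phi (fsec f') = mF g (mF phi f') := eqP (svalP (sigW (Hf f'))).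
pose b := @Morph Y Y [ffun y => mV phi (mV g (sec y))] [ffun f' => fsec f'] [ffun f => f].
have bF_inj : injective (mF b).
  move=> u v; rewrite !ffunE => E.
  apply: (m2 M); apply: (g_inj Hg); by rewrite -!fsecK E.
have bF_bij : bijective (mF b) := injF_bij bF_inj.
have allI f : in_img b f.
  by case: bF_bij => h _ hK; apply/existsP; exists (h f); rewrite hK.
have bV_surj : forall y, exists y', mV b y' = y.
  move=> y; exists (mV phi (ginv (sec y))); rewrite ffunE.
  by rewrite (gfib M Hg (secK _)) gK2 secK.
exists b; split.
  split; last by split; [exact: surj_bij | exact: bF_bij].
  split=> //; split=> //; split; first by move=> f _; rewrite ffunE.
  split; first by move=> f; rewrite allI.
  split.
    move=> f'; rewrite !ffunE.
    have E : mV phi (sec (bd Y (fsec f'))) = mV phi (bd X (mF phi (fsec f'))).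
      by rewrite secK (m5 M).
    rewrite (gfib M Hg E) fsecK.
    have c5' h : mV g (bd X (mF g h)) = bd X h := c5 h.
    by rewrite c5' (m5 M).
  split; first by move=> f; rewrite allI.
  split; first by move=> f; rewrite allI.
  by move=> f'; rewrite (m0b M) eqxx.
congr Morph; apply/ffunP => z; rewrite !ffunE.
- by apply: (gfib M Hg); rewrite secK.
- by rewrite fsecK.
- case: pickP => [f1 /eqP E1|n1]; case: pickP => [f2 /eqP E2|n2].
  + rewrite ffunE E1 -E2 -(gcommute Hg) E2.
    have : in_img phi z by apply/existsP; exists f1; rewrite E1.
    by rewrite (m3 M) => /eqP ->.
  + by have := n2 (gFinv z); rewrite gFK2 eqxx.
  + by rewrite -E2 (gcommute Hg).
  + by have := n2 (gFinv z); rewrite gFK2 eqxx.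
Qed.
End Surj.

Theorem corollary2p14 (X Y : graph) (phi : morph X Y) (hphi : ctd phi) :
  exists h : morph X X * morph Y Y -> morph (ghost phi) (ghost phi),
    (forall ab, arrow_aut phi ab -> is_iso (h ab)) /\
    (forall ab cd, arrow_aut phi ab -> arrow_aut phi cd -> h ab = h cd -> ab = cd) /\
    (forall g, is_iso g -> exists ab, arrow_aut phi ab /\ h ab = g) /\
    (forall ab cd, arrow_aut phi ab -> arrow_aut phi cd ->
       h (mcomp ab.1 cd.1, mcomp ab.2 cd.2) = mcomp (h ab) (h cd)).
Proof.
have M := ctd_M hphi.
exists (fun ab => toG phi ab.1).
split.
  case=> a b [Ha [Hb E]] /=.
  have [[c1 [c2 [c3 [c4 [c5 [c6 [c7 c8]]]]]]] [bV bF]] := Ha.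
  split; last by split.
  do 6 (split=> //).
  have allI f : in_img (toG phi a) f by exact (iso_img Ha f).
  split; first by move=> f; rewrite allI.
  by move=> f' _; exact (arrow_commute M Ha Hb E f').
split.
  case=> a b [c d] [Ha [Hb E1]] [Hc [Hd E2]] /= Eac.
  move/toG_inj: Eac => Eac; subst c; congr pair; exact (beta_unique M Hb Hd E1 E2).
split; last by [].
move=> g Hg; have [b [Hb E]] := beta_ex M Hg.
exists ((toX g), b); split; last exact: toGX.
by split; [exact (g_isoX M Hg) | split].
Qed.
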